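(* Let $n,m\in\omega\cup\{\infty\}$. Every $C_{n,m}$-homogeneous linear ordering is $sp$-homogeneous.
   Context: For a linear ordering $L$, $s(x)$ is the immediate successor of $x$ if it exists and $x$ otherwise, $p(x)$ the immediate predecessor if it exists and $x$ otherwise; $L$ is $sp$-homogeneous if $(L,<,s,p)$ is homogeneous (every isomorphism between finitely generated substructures extends to an automorphism). For $i\in\omega$: $S_i(x)$ holds iff $x$ has exactly $i$ successors (i.e. exactly $i$ elements $y>x$ with only finitely many elements between $x$ and $y$); $P_j(x)$ holds iff $x$ has exactly $j$ predecessors (defined dually); $Adj_k(x,y)$ holds iff there are exactly $k$ elements strictly between $x$ and $y$. $L$ is $C_{n,m}$-homogeneous if its expansion by the definable relations $\{S_i\}_{i<n}$, $\{P_j\}_{j<m}$, $\{Adj_k\}_{k<n+m}$ (with $i<\infty$ meaning all $i\in\omega$) is homogeneous, i.e. every isomorphism between finite substructures of the expansion extends to an automorphism. *)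

(* Defs.v *)
From Stdlib Require Import List Classical ClassicalEpsilon.
Import ListNotations.
Set Implicit Arguments.

Section LinOrd.
Variable L : Type.
Variable lt : L -> L -> Prop.

Definition strict_linear_order : Prop :=
  (forall x, ~ lt x x) /\
  (forall x y z, lt x y -> lt y z -> lt x z) /\
  (forall x y, lt x y \/ x = y \/ lt y x).

Definition finite_set (P : L -> Prop) : Prop :=
  exists l : list L, forall y, P y -> In y l.

Definition has_card (P : L -> Prop) (k : nat) : Prop :=
  exists l : list L, NoDup l /\ length l = k /\ (forall y, P y <-> In y l).

Definition between (x y z : L) : Prop := (lt x z /\ lt z y) \/ (lt y z /\ lt z x).

Definition is_successor (x y : L) : Prop := lt x y /\ finite_set (between x y).
Definition is_predecessor (x y : L) : Prop := lt y x /\ finite_set (between y x).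

Definition S_rel (i : nat) (x : L) : Prop := has_card (is_successor x) i.
Definition P_rel (j : nat) (x : L) : Prop := has_card (is_predecessor x) j.
Definition Adj_rel (k : nat) (x y : L) : Prop := has_card (between x y) k.

Definition imm_succ (x y : L) : Prop := lt x y /\ forall z, ~ (lt x z /\ lt z y).
Definition imm_pred (x y : L) : Prop := lt y x /\ forall z, ~ (lt y z /\ lt z x).

(* s(x): immediate successor if it exists, else x; p(x) dually *)
Definition s_fn (x : L) : L :=
  epsilon (inhabits x)
    (fun y => imm_succ x y \/ ((forall z, ~ imm_succ x z) /\ y = x)).
Definition p_fn (x : L) : L :=
  epsilon (inhabits x)
    (fun y => imm_pred x y \/ ((forall z, ~ imm_pred x z) /\ y = x)).

(* substructure of (L,<,s,p) generated by a finite set F *)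
Inductive gen (F : list L) : L -> Prop :=
| gen_base x : In x F -> gen F x
| gen_s x : gen F x -> gen F (s_fn x)
| gen_p x : gen F x -> gen F (p_fn x).

Definition bijective_fn (g : L -> L) : Prop :=
  (forall x y, g x = g y -> x = y) /\ (forall y, exists x, g x = y).

Definition sp_homogeneous : Prop :=
  forall (F G : list L) (f : L -> L),
    (forall x, gen F x -> gen G (f x)) ->
    (forall y, gen G y -> exists x, gen F x /\ f x = y) ->
    (forall x y, gen F x -> gen F y -> (lt x y <-> lt (f x) (f y))) ->
    (forall x, gen F x -> f (s_fn x) = s_fn (f x)) ->
    (forall x, gen F x -> f (p_fn x) = p_fn (f x)) ->
    exists g : L -> L,
      bijective_fn g /\
      (forall x y, lt x y <-> lt (g x) (g y)) /\
      (forall x, g (s_fn x) = s_fn (g x)) /\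
      (forall x, g (p_fn x) = p_fn (g x)) /\
      (forall x, gen F x -> g x = f x).

(* omega ∪ {∞}: Some n = n, None = ∞ *)
Definition lt_inf (i : nat) (n : option nat) : Prop :=
  match n with Some n => i < n | None => True end.
Definition add_inf (n m : option nat) : option nat :=
  match n, m with Some a, Some b => Some (a + b) | _, _ => None end.

(* (L,<) expanded by {S_i}_{i<n}, {P_j}_{j<m}, {Adj_k}_{k<n+m} is homogeneous *)
Definition Cnm_homogeneous (n m : option nat) : Prop :=
  forall (A B : list L) (f : L -> L),
    (forall x, In x A -> In (f x) B) ->
    (forall y, In y B -> exists x, In x A /\ f x = y) ->
    (forall x y, In x A -> In y A -> (lt x y <-> lt (f x) (f y))) ->
    (forall i x, lt_inf i n -> In x A -> (S_rel i x <-> S_rel i (f x))) ->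
    (forall j x, lt_inf j m -> In x A -> (P_rel j x <-> P_rel j (f x))) ->
    (forall k x y, lt_inf k (add_inf n m) -> In x A -> In y A ->
        (Adj_rel k x y <-> Adj_rel k (f x) (f y))) ->
    exists g : L -> L,
      bijective_fn g /\
      (forall x y, lt x y <-> lt (g x) (g y)) /\
      (forall i x, lt_inf i n -> (S_rel i x <-> S_rel i (g x))) /\
      (forall j x, lt_inf j m -> (P_rel j x <-> P_rel j (g x))) /\
      (forall k x y, lt_inf k (add_inf n m) -> (Adj_rel k x y <-> Adj_rel k (g x) (g y))) /\
      (forall x, In x A -> g x = f x).

End LinOrd.

(* Main.v *)
Require Import Defs.
From Stdlib Require Import List Classical ClassicalEpsilon Lia.
Import ListNotations.

Fixpoint it {L : Type} (f : L -> L) (k : nat) (x : L) : L :=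
  match k with 0 => x | S k => it f k (f x) end.

Lemma it_S {L : Type} (f : L -> L) k x : it f (S k) x = f (it f k x).
Proof. revert x; induction k; intros x; simpl; auto. rewrite <- IHk. reflexivity. Qed.

Lemma s_spec {L} (lt : L -> L -> Prop) x :
  imm_succ lt x (s_fn lt x) \/ ((forall z, ~ imm_succ lt x z) /\ s_fn lt x = x).
Proof.
  unfold s_fn. apply epsilon_spec.
  destruct (classic (exists z, imm_succ lt x z)) as [[z H]|H].
  - exists z; left; auto.
  - exists x; right; split; auto. intros z Hz; apply H; eauto.
Qed.

Lemma p_spec {L} (lt : L -> L -> Prop) x :
  imm_pred lt x (p_fn lt x) \/ ((forall z, ~ imm_pred lt x z) /\ p_fn lt x = x).
Proof.
  unfold p_fn. apply epsilon_spec.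
  destruct (classic (exists z, imm_pred lt x z)) as [[z H]|H].
  - exists z; left; auto.
  - exists x; right; split; auto. intros z Hz; apply H; eauto.
Qed.

Section S.
Context {L : Type} (lt : L -> L -> Prop) (slo : strict_linear_order lt).

Let irr : forall x, ~ lt x x. Proof. apply slo. Qed.
Let trans : forall x y z, lt x y -> lt y z -> lt x z. Proof. apply slo. Qed.
Let tri : forall x y, lt x y \/ x = y \/ lt y x. Proof. apply slo. Qed.

Lemma imm_succ_uniq x y y' : imm_succ lt x y -> imm_succ lt x y' -> y = y'.
Proof.
  intros [H1 H2] [H1' H2']. destruct (tri y y') as [H|[H|H]]; auto.
  - exfalso; apply (H2' y); auto.
  - exfalso; apply (H2 y'); auto.
Qed.

Lemma imm_pred_uniq x y y' : imm_pred lt x y -> imm_pred lt x y' -> y = y'.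
Proof.
  intros [H1 H2] [H1' H2']. destruct (tri y y') as [H|[H|H]]; auto.
  - exfalso; apply (H2 y'); auto.
  - exfalso; apply (H2' y); auto.
Qed.

Lemma s_eq x y : imm_succ lt x y -> s_fn lt x = y.
Proof.
  intros H. destruct (s_spec lt x) as [H'|[H' _]].
  - eapply imm_succ_uniq; eauto.
  - exfalso; eapply H'; eauto.
Qed.

Lemma p_eq x y : imm_pred lt x y -> p_fn lt x = y.
Proof.
  intros H. destruct (p_spec lt x) as [H'|[H' _]].
  - eapply imm_pred_uniq; eauto.
  - exfalso; eapply H'; eauto.
Qed.

Lemma succ_pred x y : imm_succ lt x y -> imm_pred lt y x.
Proof. intros [H1 H2]; split; auto. Qed.

Lemma B k x z : lt x z -> lt z (it (s_fn lt) k x) -> exists j, j < k /\ z = it (s_fn lt) j x.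
Proof.
  induction k; intros H1 H2.
  - simpl in H2. exfalso; apply (irr x); eauto.
  - rewrite it_S in H2. set (w := it (s_fn lt) k x) in *.
    destruct (s_spec lt w) as [[Ha Hb]|[_ Hc]].
    + destruct (tri z w) as [H|[H|H]].
      * destruct (IHk H1 H) as [j [? ?]]; exists j; split; [lia|auto].
      * exists k; split; [lia|auto].
      * exfalso; apply (Hb z); auto.
    + rewrite Hc in H2. destruct (IHk H1 H2) as [j [? ?]]; exists j; split; [lia|auto].
Qed.

Lemma B_fin k x : lt x (it (s_fn lt) k x) -> is_successor lt x (it (s_fn lt) k x).
Proof.
  intros H. split; auto. exists (map (fun j => it (s_fn lt) j x) (seq 0 k)).
  intros z [[H1 H2]|[H1 H2]].
  - destruct (B k x z H1 H2) as [j [? ->]]. apply in_map_iff. exists j; split; auto.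
    apply in_seq; lia.
  - exfalso; apply (irr x); eauto.
Qed.

Lemma min_in (P : L -> Prop) l : (exists z, In z l /\ P z) ->
  exists m, In m l /\ P m /\ forall z, In z l -> P z -> ~ lt z m.
Proof.
  induction l as [|a l IH]; intros [z [Hz Pz]]; [destruct Hz|].
  destruct (classic (exists z, In z l /\ P z)) as [He|He].
  - destruct (IH He) as [m [Hm [Pm Hmin]]].
    destruct (classic (P a /\ lt a m)) as [[Pa Ham]|Hn].
    + exists a; split; [left; auto|split; auto].
      intros w [->|Hw] Pw Hwa; [apply (irr w); auto|]. apply (Hmin w Hw Pw); eauto.
    + exists m; split; [right; auto|split; auto].
      intros w [->|Hw] Pw Hwm; [apply Hn; auto|]. apply (Hmin w Hw Pw); eauto.
  - destruct Hz as [<-|Hz]; [|exfalso; apply He; eauto].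
    exists a; split; [left; auto|split; auto].
    intros w [->|Hw] Pw Hwa; [apply (irr w); auto|]. apply He; eauto.
Qed.

Lemma A_aux n : forall x y l, length l <= n -> (forall z, between lt x y z -> In z l) -> lt x y ->
  exists k, y = it (s_fn lt) k x /\ x = it (p_fn lt) k y.
Proof.
  induction n; intros x y l Hlen Hcov Hxy.
  - destruct (classic (exists z, lt x z /\ lt z y)) as [[z [H1 H2]]|Hn].
    + destruct l; [|simpl in Hlen; lia]. destruct (Hcov z (or_introl (conj H1 H2))).
    + assert (Hi : imm_succ lt x y) by (split; auto; intros z Hz; apply Hn; eauto).
      exists 1; simpl. rewrite (s_eq _ _ Hi). rewrite (p_eq _ _ (succ_pred _ _ Hi)). auto.
  - destruct (classic (exists z, In z l /\ (lt x z /\ lt z y))) as [He|Hn].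
    + destruct (min_in _ _ He) as [m [Hm [[Hxm Hmy] Hmin]]].
      assert (Hi : imm_succ lt x m).
      { split; auto. intros w [H1 H2]. apply (Hmin w); [apply Hcov; left; split; eauto | split; eauto | auto]. }
      destruct (in_split _ _ Hm) as [l1 [l2 ->]].
      destruct (IHn m y (l1 ++ l2)) as [k [Hk1 Hk2]]; auto.
      * rewrite length_app in *; simpl in Hlen; lia.
      * intros z Hz. assert (Hz' : In z (l1 ++ m :: l2)).
        { apply Hcov. destruct Hz as [[H1 H2]|[H1 H2]]; [left; split; eauto|].
          exfalso; apply (irr y); eauto. }
        apply in_app_or in Hz'. apply in_or_app. destruct Hz' as [?|[->|?]]; auto.
        exfalso. destruct Hz as [[H1 H2]|[H1 H2]]; apply (irr z); eauto.
      * exists (S k). split; [simpl; rewrite (s_eq _ _ Hi); auto|].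
        rewrite it_S, <- Hk2. rewrite (p_eq _ _ (succ_pred _ _ Hi)). auto.
    + assert (Hi : imm_succ lt x y).
      { split; auto; intros z Hz; apply Hn. exists z; split; auto. apply Hcov; left; auto. }
      exists 1; simpl. rewrite (s_eq _ _ Hi). rewrite (p_eq _ _ (succ_pred _ _ Hi)). auto.
Qed.

Lemma A x y : is_successor lt x y -> exists k, y = it (s_fn lt) k x /\ x = it (p_fn lt) k y.
Proof. intros [H [l Hl]]. eapply A_aux; eauto. Qed.


Lemma clo_it (E : L -> Prop) (Es : forall x, E x -> E (s_fn lt x)) (Ep : forall x, E x -> E (p_fn lt x)) :
  forall k x, E x -> E (it (s_fn lt) k x) /\ E (it (p_fn lt) k x).
Proof. induction k; intros x Hx; simpl; auto. split; [apply (IHk (s_fn lt x)) | apply (IHk (p_fn lt x))]; auto. Qed.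

Lemma succ_clo (E : L -> Prop) (Es : forall x, E x -> E (s_fn lt x)) (Ep : forall x, E x -> E (p_fn lt x)) x y :
  E x -> is_successor lt x y -> E y.
Proof. intros Hx H. destruct (A x y H) as [k [-> _]]. apply clo_it; auto. Qed.

Lemma pred_clo (E : L -> Prop) (Es : forall x, E x -> E (s_fn lt x)) (Ep : forall x, E x -> E (p_fn lt x)) x y :
  E x -> is_successor lt y x -> E y.
Proof. intros Hx H. destruct (A y x H) as [k [_ ->]]. apply clo_it; auto. Qed.

Lemma betw_clo (E : L -> Prop) (Es : forall x, E x -> E (s_fn lt x)) (Ep : forall x, E x -> E (p_fn lt x)) x y z :
  E x -> is_successor lt x y -> between lt x y z -> E z.
Proof.
  intros Hx H Hz. destruct (A x y H) as [k [Hk _]]. destruct H as [Hxy _].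
  destruct Hz as [[H1 H2]|[H1 H2]].
  - rewrite Hk in H2. destruct (B k x z H1 H2) as [j [_ ->]]. apply clo_it; auto.
  - exfalso; apply (irr x); eauto.
Qed.

Lemma has_card_ext (P Q : L -> Prop) k : (forall z, P z <-> Q z) -> has_card P k -> has_card Q k.
Proof. intros H [l [H1 [H2 H3]]]. exists l; split; [|split]; auto. intros y; rewrite <- H; auto. Qed.

Variables (D D' : L -> Prop) (h : L -> L).
Hypothesis H1 : forall x, D x -> D' (h x).
Hypothesis H2 : forall y, D' y -> exists x, D x /\ h x = y.
Hypothesis H3 : forall x y, D x -> D y -> (lt x y <-> lt (h x) (h y)).
Hypothesis H4 : forall x, D x -> h (s_fn lt x) = s_fn lt (h x).
Hypothesis H5 : forall x, D x -> h (p_fn lt x) = p_fn lt (h x).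
Hypothesis Ds : forall x, D x -> D (s_fn lt x).
Hypothesis Dp : forall x, D x -> D (p_fn lt x).
Hypothesis D's : forall x, D' x -> D' (s_fn lt x).
Hypothesis D'p : forall x, D' x -> D' (p_fn lt x).

Lemma h_it k : forall x, D x -> h (it (s_fn lt) k x) = it (s_fn lt) k (h x).
Proof. induction k; intros x Hx; simpl; auto. rewrite IHk; auto. rewrite H4; auto. Qed.

Lemma h_inj x y : D x -> D y -> h x = h y -> x = y.
Proof.
  intros Hx Hy E. destruct (tri x y) as [H|[H|H]]; auto.
  - apply H3 in H; auto. rewrite E in H. destruct (irr _ H).
  - apply H3 in H; auto. rewrite E in H. destruct (irr _ H).
Qed.

Lemma succ_tr x y : D x -> D y -> (is_successor lt x y <-> is_successor lt (h x) (h y)).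
Proof.
  intros Hx Hy. split; intros H.
  - destruct (A x y H) as [k [Hk _]]. destruct H as [Hxy _].
    apply H3 in Hxy; auto. rewrite Hk in *. rewrite h_it in *; auto. apply B_fin; auto.
  - destruct (A _ _ H) as [k [Hk _]]. destruct H as [Hxy _].
    rewrite <- h_it in Hk; auto.
    apply h_inj in Hk; auto; [|apply clo_it; auto].
    apply H3 in Hxy; auto. rewrite Hk in *. apply B_fin; auto.
Qed.

Lemma card_tr (P Q : L -> Prop) k : (forall z, P z -> D z) -> (forall z, Q z -> D' z) ->
  (forall z, D z -> (P z <-> Q (h z))) -> (has_card P k <-> has_card Q k).
Proof.
  intros HP HQ HPQ. split.
  - intros [l [Hn [Hl Hc]]]. exists (map h l). split; [|split].
    + assert (forall z, In z l -> D z) by (intros z Hz; apply HP, Hc; auto).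
      clear Hl Hc. induction l as [|a l IH]; simpl; constructor.
      * intros Hin. apply in_map_iff in Hin. destruct Hin as [w [Ew Hw]].
        apply h_inj in Ew; [|apply H; simpl; auto|apply H; simpl; auto]. subst. inversion Hn; auto.
      * apply IH; [inversion Hn; auto|]. intros; apply H; simpl; auto.
    + rewrite length_map; auto.
    + intros y; split; intros Hy.
      * destruct (H2 y (HQ y Hy)) as [w [Hw <-]]. apply in_map. apply Hc, HPQ; auto.
      * apply in_map_iff in Hy. destruct Hy as [w [<- Hw]]. apply HPQ; [apply HP|]; apply Hc; auto.
  - intros [l' [Hn [Hl Hc]]].
    assert (Hex : forall ll, NoDup ll -> (forall z, In z ll -> D' z) ->
              exists l, NoDup l /\ map h l = ll /\ (forall z, In z l -> D z)).
    { clear Hn Hl Hc l'. intros ll; induction ll as [|a l'0 IH]; intros Hn HD.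
      - exists []; split; [constructor|split; [reflexivity| intros z []]].
      - destruct (H2 a (HD a (or_introl eq_refl))) as [w [Hw <-]].
        inversion Hn as [|? ? Hnin Hnd].
        destruct IH as [l0 [Hl1 [Hl2 Hl3]]]; auto. intros z Hz; apply HD; right; auto.
        exists (w :: l0). split; [|split].
        + constructor; auto. intros Hin. apply Hnin. rewrite <- Hl2. apply in_map; auto.
        + simpl; congruence.
        + intros z [<-|Hz]; auto. }
    destruct (Hex l' Hn (fun z Hz => HQ z (proj2 (Hc z) Hz))) as [l [Hl1 [Hl2 Hl3]]].
    exists l. split; [|split]; auto.
    + rewrite <- Hl, <- Hl2, length_map; auto.
    + intros y; split; intros Hy.
      * assert (Dy : D y) by auto.
        apply HPQ in Hy; auto. apply Hc in Hy. rewrite <- Hl2 in Hy.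
        apply in_map_iff in Hy. destruct Hy as [w [Ew Hw]].
        apply h_inj in Ew; auto. subst; auto.
      * apply HPQ; auto. apply Hc. rewrite <- Hl2. apply in_map; auto.
Qed.

Lemma S_tr i x : D x -> (S_rel lt i x <-> S_rel lt i (h x)).
Proof.
  intros Hx. apply card_tr.
  - intros z Hz. eapply succ_clo; eauto.
  - intros z Hz. eapply succ_clo with (E := D'); eauto.
  - intros z Hz. apply succ_tr; auto.
Qed.

Lemma P_tr i x : D x -> (P_rel lt i x <-> P_rel lt i (h x)).
Proof.
  intros Hx. apply card_tr.
  - intros z Hz. eapply pred_clo; eauto.
  - intros z Hz. eapply pred_clo with (E := D'); eauto.
  - intros z Hz. apply succ_tr; auto.
Qed.

Lemma fin_succ x y k : lt x y -> has_card (between lt x y) k -> is_successor lt x y.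
Proof. intros H [l [_ [_ Hl]]]. split; auto. exists l; intros z; apply Hl. Qed.

Lemma Adj_lt k x y : D x -> D y -> lt x y -> (Adj_rel lt k x y <-> Adj_rel lt k (h x) (h y)).
Proof.
  intros Hx Hy Hxy. pose proof (proj1 (H3 x y Hx Hy) Hxy) as Hxy'.
  destruct (classic (is_successor lt x y)) as [Hs|Hs].
  - pose proof (proj1 (succ_tr x y Hx Hy) Hs) as Hs'.
    apply card_tr.
    + intros z Hz. apply (betw_clo D Ds Dp x y z Hx Hs Hz).
    + intros z Hz. apply (betw_clo D' D's D'p (h x) (h y) z (H1 x Hx) Hs' Hz).
    + intros z Hz. unfold between. rewrite <- (H3 x z), <- (H3 z y), <- (H3 y z), <- (H3 z x); auto. tauto.
  - split; intros H; exfalso; apply Hs.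
    + eapply fin_succ; eauto.
    + apply (proj2 (succ_tr x y Hx Hy)). eapply fin_succ; eauto.
Qed.

Lemma Adj_sym k x y : Adj_rel lt k x y -> Adj_rel lt k y x.
Proof. apply has_card_ext. intros z; unfold between; tauto. Qed.

Lemma Adj_tr k x y : D x -> D y -> (Adj_rel lt k x y <-> Adj_rel lt k (h x) (h y)).
Proof.
  intros Hx Hy. destruct (tri x y) as [H|[<-|H]].
  - apply Adj_lt; auto.
  - apply card_tr; try (intros z [[Ha Hb]|[Ha Hb]]; exfalso; first [apply (irr x); solve [eauto] | apply (irr (h x)); solve [eauto]]).
    intros z Hz; unfold between; split; intros [[Ha Hb]|[Ha Hb]]; exfalso; first [apply (irr x); solve [eauto] | apply (irr (h x)); solve [eauto]].
  - split; intros Ha; apply Adj_sym; apply Adj_sym in Ha; apply (Adj_lt k y x); auto.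
Qed.

End S.

Lemma aut_s {L} (lt : L -> L -> Prop) (slo : strict_linear_order lt) g :
  bijective_fn g -> (forall x y, lt x y <-> lt (g x) (g y)) ->
  (forall x, g (s_fn lt x) = s_fn lt (g x)) /\ (forall x, g (p_fn lt x) = p_fn lt (g x)).
Proof.
  intros [Gi Gs] Go.
  assert (Ts : forall x y, imm_succ lt x y -> imm_succ lt (g x) (g y)).
  { intros x y [Ha Hb]. split; [apply (proj1 (Go _ _)); auto|]. intros z' [Hc Hd].
    destruct (Gs z') as [z <-]. apply (Hb z); split; apply (proj2 (Go _ _)); auto. }
  assert (Tp : forall x y, imm_pred lt x y -> imm_pred lt (g x) (g y)).
  { intros x y [Ha Hb]. split; [apply (proj1 (Go _ _)); auto|]. intros z' [Hc Hd].
    destruct (Gs z') as [z <-]. apply (Hb z); split; apply (proj2 (Go _ _)); auto. }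
  split; intros x.
  - destruct (s_spec lt x) as [H|[H E]].
    + symmetry; apply s_eq; auto.
    + rewrite E. destruct (s_spec lt (g x)) as [H'|[_ E']]; auto.
      destruct (Gs (s_fn lt (g x))) as [w Ew]. rewrite <- Ew in H'.
      exfalso; apply (H w). destruct H' as [Ha Hb]. split; [apply (proj2 (Go _ _)); auto|].
      intros z [Hc Hd]. apply (Hb (g z)); split; apply (proj1 (Go _ _)); auto.
  - destruct (p_spec lt x) as [H|[H E]].
    + symmetry; apply p_eq; auto.
    + rewrite E. destruct (p_spec lt (g x)) as [H'|[_ E']]; auto.
      destruct (Gs (p_fn lt (g x))) as [w Ew]. rewrite <- Ew in H'.
      exfalso; apply (H w). destruct H' as [Ha Hb]. split; [apply (proj2 (Go _ _)); auto|].
      intros z [Hc Hd]. apply (Hb (g z)); split; apply (proj1 (Go _ _)); auto.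
Qed.

Theorem mainTheorem6 (n m : option nat) (L : Type) (lt : L -> L -> Prop) :
  strict_linear_order lt ->
  Cnm_homogeneous lt n m ->
  sp_homogeneous lt.
Proof.
  intros slo HC F G f Hf1 Hf2 Hf3 Hf4 Hf5.
  assert (Cs : forall E x, gen lt E x -> gen lt E (s_fn lt x)) by (intros; constructor; auto).
  assert (Cp : forall E x, gen lt E x -> gen lt E (p_fn lt x)) by (intros; apply gen_p; auto).
  destruct (HC F (map f F) f) as [g [Gb [Go [_ [_ [_ Gf]]]]]].
  - intros x Hx; apply in_map; auto.
  - intros y Hy; apply in_map_iff in Hy; destruct Hy as [x [<- Hx]]; eauto.
  - intros x y Hx Hy; apply Hf3; constructor; auto.
  - intros i x _ Hx. apply (S_tr lt slo _ _ f Hf1 Hf2 Hf3 Hf4 (Cs F) (Cp F) (Cs G) (Cp G)); constructor; auto.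
  - intros i x _ Hx. apply (P_tr lt slo _ _ f Hf1 Hf2 Hf3 Hf4 (Cs F) (Cp F) (Cs G) (Cp G)); constructor; auto.
  - intros k x y _ Hx Hy. apply (Adj_tr lt slo _ _ f Hf1 Hf2 Hf3 Hf4 (Cs F) (Cp F) (Cs G) (Cp G)); constructor; auto.
  - destruct (aut_s lt slo g Gb Go) as [Gs Gp].
    exists g. split; [|split; [|split; [|split]]]; auto.
    intros x Hx. induction Hx.
    + auto.
    + rewrite Gs, IHHx, Hf4; auto.
    + rewrite Gp, IHHx, Hf5; auto.
Qed.
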